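(* Let $m\ge2$, $K$ an algebraic number field, $a(z)\in K[z]$ monic of degree $m$, $b(z)\in K[z]$ of degree $\le m-1$ with $z^{m-1}$-coefficient $b_{m-1}$, with $a(z)=\prod_{i=1}^m(z-\alpha_i)$, $\alpha_i\in K$ pairwise distinct, $s_i:=b(\alpha_i)/a'(\alpha_i)\in\mathbb{Q}\setminus\mathbb{Z}_{\le-1}$, $b_{m-1}\notin\mathbb{Z}_{<-1}$. Let $v$ be an Archimedean place of $K$ and put $c_v(\boldsymbol\alpha)=\sum_{i=1}^m\mathrm{h}_v(\alpha_i)+m\log|4|_v$. Then, as $n\to\infty$, \[\log\max_{0\le\ell\le m-1}\{\|P_{n,\ell}\|_v\}\le n\,c_v(\boldsymbol\alpha)+o(n).\]
   Context: $P_{n,\ell}(z)=\frac1{n!}(\frac{d}{dz}+\frac{b(z)}{a(z)})^n(a(z)^nz^\ell)$ (operator applied $n$ times; a polynomial). For $R=\sum_kr_kz^k$, $\|R\|_v=\max_k|r_k|_v$. For Archimedean $v$ with embedding $\iota_v$, $|x|_v=|\iota_v(x)|^{[K_v:\mathbb{R}]/[K:\mathbb{Q}]}$; $\mathrm{h}_v(\alpha)=\log\max\{1,|\alpha|_v\}$. $o(n)$ denotes a quantity $g(n)$ with $g(n)/n\to0$. *)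

(* Defs.v *)
From HB Require Import structures.
From mathcomp Require Import all_boot all_order all_algebra all_field.
From mathcomp Require Import boolp classical_sets reals exp.
From mathcomp Require Import complex.
Set Implicit Arguments. Unset Strict Implicit. Unset Printing Implicit Defensive.
Import Order.TTheory GRing.Theory Num.Theory.
Local Open Scope ring_scope.

Section Defs.
Variable R : realType.
Variable K : fieldExtType rat.

(* [K_v : R] for the Archimedean place v given by the embedding iota *)
Definition local_deg (iota : {rmorphism K -> R[i]}) : nat :=
  if `[< forall x : K, complex.Im (iota x) = 0 >] then 1%N else 2%N.

Definition place_exp (iota : {rmorphism K -> R[i]}) : R :=
  (local_deg iota)%:R / (\dim {:K})%:R.

(* |x|_v = |iota_v(x)|^([K_v:R]/[K:Q]); `|.| is the complex modulus in R[i], real-valued, and Re extracts it *)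
Definition absv (iota : {rmorphism K -> R[i]}) (x : K) : R :=
  complex.Re `|iota x| `^ place_exp iota.

Definition hv (iota : {rmorphism K -> R[i]}) (x : K) : R :=
  ln (Num.max 1 (absv iota x)).

Definition polyabsv (iota : {rmorphism K -> R[i]}) (p : {poly K}) : R :=
  \big[Num.max/0]_(k < size p) absv iota p`_k.
End Defs.

(* The operator F |-> d/dz F + (b/a) F, on polynomials F; it is only applied to
   polynomials F divisible by a (namely a^(n-k) * ... with k < n), so the
   division below is exact. *)
Definition opDb (K : fieldType) (a b : {poly K}) (F : {poly K}) : {poly K} :=
  F^`() + (b * F) %/ a.

Definition Pnl (K : fieldType) (a b : {poly K}) (n l : nat) : {poly K} :=
  (n`!)%:R^-1 *: iter n (opDb a b) (a ^+ n * 'X^l).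

(* Main.v *)
Require Import Defs.
From HB Require Import structures.
From mathcomp Require Import all_boot all_order all_algebra all_field.
From mathcomp Require Import boolp classical_sets filter reals exp topology normedtype sequences.
Import numFieldNormedType.Exports.
From mathcomp Require Import complex.
From mathcomp Require Import ring.
Import Order.TTheory GRing.Theory Num.Theory.
Local Open Scope classical_set_scope.
Local Open Scope ring_scope.
Local Open Scope complex_scope.


Fixpoint Gs {T : comNzRingType} (a b : {poly T}) (n l k : nat) : {poly T} :=
  if k is k'.+1 then (a^`() *+ (n - k') + b) * Gs a b n l k' + a * (Gs a b n l k')^`()
  else 'X^l.

Lemma explicitG (T : comNzRingType) (A : {poly T}) S n l k : (k <= n)%N ->
  A ^+ S * A ^+ (n - k) * Gs A (A^`() *+ S) n l k = (A ^+ (n + S) * 'X^l)^`(k).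
Proof.
elim: k => [|k IH] kn; first by rewrite subn0 -exprD addnC.
rewrite derivnS -IH ?(ltnW kn) //=.
have [j hj] : exists j, (n - k = j.+1)%N by exists (n - k.+1)%N; rewrite subnS prednK // subn_gt0.
have -> : (n - k.+1 = j)%N by rewrite subnS hj.
rewrite hj -!exprD derivM deriv_exp /= addnS /= exprSr.
rewrite -mulrnDr.
have -> : (j.+1 + S = (S + j).+1)%N by rewrite addSn addnC.
ring.
Qed.

Lemma iterG (K : fieldType) (a b : {poly K}) n l k : a != 0 -> (k <= n)%N ->
  iter k (opDb a b) (a ^+ n * 'X^l) = a ^+ (n - k) * Gs a b n l k.
Proof.
move=> a0; elim: k => [|k IH] kn; first by rewrite subn0.
rewrite iterS IH ?(ltnW kn) // /opDb /=.
have [j hj] : exists j, (n - k = j.+1)%N by exists (n - k.+1)%N; rewrite subnS prednK // subn_gt0.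
have -> : (n - k.+1 = j)%N by rewrite subnS hj.
rewrite hj.
have -> : b * (a ^+ j.+1 * Gs a b n l k) = (b * a ^+ j * Gs a b n l k) * a.
  by rewrite exprSr; ring.
rewrite mulpK // derivM deriv_exp /=.
rewrite exprSr; ring.
Qed.


Lemma bin_le2 N k : ('C(N, k) <= 2 ^ N)%N.
Proof.
elim: N k => [|N IH] k; first by case: k.
case: k => [|k]; first by rewrite bin0 expn_gt0.
by rewrite binS expnS mul2n -addnn leq_add.
Qed.

Section Maj.
Variable R : realType.
Local Notation C := R[i].
Definition maj (p q : {poly C}) := forall j, `|p`_j| <= q`_j.

Lemma maj_ge0 (p q : {poly C}) j : maj p q -> 0 <= q`_j.
Proof. by move=> h; apply: le_trans (h j). Qed.
Arguments maj_ge0 {p q} j.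

Lemma maj_self (p q : {poly C}) : maj p q -> maj q q.
Proof. by move=> h j; rewrite ger0_norm // (maj_ge0 _ h). Qed.

Lemma maj_add (p1 q1 p2 q2 : {poly C}) : maj p1 q1 -> maj p2 q2 -> maj (p1 + p2) (q1 + q2).
Proof. by move=> h1 h2 j; rewrite !coefD (le_trans (ler_normD _ _)) // lerD. Qed.

Lemma maj_mul (p1 q1 p2 q2 : {poly C}) : maj p1 q1 -> maj p2 q2 -> maj (p1 * p2) (q1 * q2).
Proof.
move=> h1 h2 j; rewrite !coefM (le_trans (ler_norm_sum _ _ _)) //.
apply: ler_sum => i _; rewrite normrM ler_pM //.
Qed.

Lemma maj_muln (p q : {poly C}) k : maj p q -> maj (p *+ k) (q *+ k).
Proof. by move=> h j; rewrite !coefMn normrMn lerMn2r h orbT. Qed.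

Lemma maj_deriv (p q : {poly C}) : maj p q -> maj p^`() q^`().
Proof. by move=> h j; rewrite !coef_deriv normrMn lerMn2r h orbT. Qed.

Lemma maj_Xn l : maj 'X^l 'X^l.
Proof. by move=> j; rewrite coefXn; case: (j == l); rewrite ?normr1 ?normr0. Qed.

Lemma maj_exp (p q : {poly C}) k : maj p q -> maj (p ^+ k) (q ^+ k).
Proof.
move=> h; elim: k => [|k IH]; first by rewrite !expr0 -(expr0 'X); apply: maj_Xn.
by rewrite !exprS; apply: maj_mul.
Qed.

Lemma maj_Gs (a b A B : {poly C}) n l k : maj a A -> maj b B -> maj (Gs a b n l k) (Gs A B n l k).
Proof.
move=> ha hb; elim: k => [|k IH] /=; first exact: maj_Xn.
apply: maj_add; apply: maj_mul => //; last exact: maj_deriv.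
by apply: maj_add => //; apply: maj_muln; apply: maj_deriv.
Qed.

Lemma coef_le_horner1 (Q : {poly C}) j : maj Q Q -> Q`_j <= Q.[1].
Proof.
move=> hQ; have [jl|jg] := ltnP j (size Q).
  rewrite horner_coef (bigD1 (Ordinal jl)) //= expr1n mulr1 lerDl.
  by apply: sumr_ge0 => i _; rewrite expr1n mulr1 (maj_ge0 _ hQ).
rewrite nth_default // horner_coef; apply: sumr_ge0 => i _.
by rewrite expr1n mulr1 (maj_ge0 _ hQ).
Qed.

Lemma key (A g : {poly C}) (S n l : nat) :
  maj g (Gs A (A^`() *+ S) n l n) -> maj A A -> 1 <= A`_0 ->
  forall k, `|(n`!%:R)^-1 * g`_k| <=
            (A ^+ (n + S) * 'X^l).[1] *+ 2 ^ size (A ^+ (n + S) * 'X^l).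
Proof.
move=> hg hA hA0 k.
set H := Gs A (A^`() *+ S) n l n.
set Q := A ^+ (n + S) * 'X^l.
have hH : maj H H := @maj_self g _ hg.
have hQ : maj Q Q by apply: maj_mul; [apply: maj_exp | apply: maj_Xn].
have hw : maj (A ^+ S) (A ^+ S) by apply: maj_exp.
have nf0 : (n`!%:R : C) != 0 by rewrite pnatr_eq0 -lt0n fact_gt0.
have nfp : (0 : C) <= (n`!%:R)^-1 by rewrite invr_ge0 ler0n.
have step1 : `|(n`!%:R)^-1 * g`_k| <= (n`!%:R)^-1 * H`_k.
  by rewrite normrM normfV normr_nat ler_wpM2l.
have step2 : H`_k <= (A ^+ S * H)`_k.
  rewrite coefM big_ord_recl /= subn0.
  have -> : (A ^+ S)`_0 = A`_0 ^+ S by rewrite -horner_coef0 horner_exp horner_coef0.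
  apply: le_trans (_ : A`_0 ^+ S * H`_k <= _).
    by rewrite ler_peMl ?(maj_ge0 _ hH) // exprn_ege1.
  rewrite lerDl; apply: sumr_ge0 => i _.
  by rewrite mulr_ge0 // (maj_ge0 _ hw, maj_ge0 _ hH).
have step3 : A ^+ S * H = Q^`(n).
  by rewrite -(@explicitG _ A S n l n (leqnn n)) subnn expr0 mulr1.
apply: le_trans step1 _; apply: le_trans (ler_wpM2l nfp step2) _.
have hc : forall y : C, (n`!%:R)^-1 * (y *+ n`!) = y.
  by move=> y; rewrite -(mulr_natr y) mulrCA mulVf // mulr1.
rewrite step3 coef_derivn -bin_ffact mulrnA hc.
have [jl|jg] := ltnP (n + k) (size Q).
  have h1 : Q`_(n + k) *+ 'C(n + k, n) <= Q.[1] *+ 'C(n + k, n).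
    by rewrite ler_wMn2r // coef_le_horner1.
  apply: le_trans h1 _.
  rewrite -!(mulr_natr Q.[1]); apply: ler_wpM2l.
    have h2 := maj_ge0 0 hQ; have h3 := coef_le_horner1 Q 0 hQ.
    exact: le_trans h2 h3.
  rewrite ler_nat; by apply: leq_trans (bin_le2 _ _) _; rewrite leq_exp2l // ltnW.
rewrite nth_default // mul0rn mulrn_wge0 //.
have h2 := maj_ge0 0 hQ; have h3 := coef_le_horner1 Q 0 hQ.
exact: le_trans h2 h3.
Qed.

Lemma maj_selfP (q : {poly C}) : (forall j, 0 <= q`_j) -> maj q q.
Proof. by move=> h j; rewrite ger0_norm. Qed.

Lemma maj_XsubC (c : C) (g : R) : `|c| <= g%:C ->
  maj ('X - c%:P) ('X - (- g%:C)%:P).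
Proof.
move=> h j; rewrite !coefB !coefX !coefC.
case: j => [|[|j]] /=; rewrite ?subr0 ?sub0r ?opprK ?normrN ?normr1 ?normr0 //.
Qed.

Lemma Aprop (k : nat) (f : 'I_k -> R) : (forall i, 1 <= f i) ->
  maj (\prod_(i < k) ('X - (- (f i)%:C)%:P)) (\prod_(i < k) ('X - (- (f i)%:C)%:P)) /\
  (forall j, (j <= k)%N -> 1 <= (\prod_(i < k) ('X - (- (f i)%:C)%:P))`_j).
Proof.
elim: k f => [|k IH] f hf.
  rewrite big_ord0; split; first by rewrite -(expr0 'X); apply: maj_Xn.
  by case=> // _; rewrite coef1.
have [h1 h2] := IH (fun i => f (widen_ord (leqnSn k) i)) (fun i => hf _).
set P := \prod_(i < k) _ in h1 h2.
have gC : (1 : C) <= (f ord_max)%:C by have := hf ord_max; rewrite -lecR.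
have g0 : (0 : C) <= (f ord_max)%:C by apply: le_trans gC; rewrite ler01.
rewrite big_ord_recr /= -/P.
have hX : maj ('X - (- (f ord_max)%:C)%:P) ('X - (- (f ord_max)%:C)%:P).
  by apply: maj_XsubC; rewrite normrN ger0_norm.
split; first exact: maj_mul.
have -> : 'X - (- (f ord_max)%:C)%:P = 'X + ((f ord_max)%:C)%:P by rewrite polyCN opprK.
move=> j hj; rewrite mulrDr coefD coefMX coefMC.
case: j hj => [|j] hj /=.
  by rewrite add0r mulr_ege1 // h2.
apply: le_trans (h2 j hj) _; rewrite lerDl mulr_ge0 //.
exact: (maj_ge0 _ h1).
Qed.

Lemma normC_Re (x : C) : `|x| = (@complex.Re R `|x|)%:C :> C.
Proof. by rewrite normc_def. Qed.

Lemma Re_norm_ge0 (x : C) : 0 <= @complex.Re R `|x|.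
Proof. by have := normr_ge0 x; rewrite lecE => /andP[]. Qed.

End Maj.
Arguments maj {R}. Arguments maj_ge0 {R p q} j. Arguments maj_mul {R p1 q1 p2 q2}.
Arguments maj_Xn {R} l. Arguments maj_XsubC {R c g}. Arguments maj_Gs {R a b A B} n l k.
Arguments key {R A g S n l}. Arguments Aprop {R k f}. Arguments normC_Re {R} x.
Arguments Re_norm_ge0 {R} x. Arguments maj_exp {R p q} k.

Lemma ln_prod (R : realType) (k : nat) (f : 'I_k -> R) : (forall i, 0 < f i) ->
  ln (\prod_(i < k) f i) = \sum_(i < k) ln (f i).
Proof.
move=> hf.
have : 0 < \prod_(i < k) f i /\ ln (\prod_(i < k) f i) = \sum_(i < k) ln (f i).
  apply: (big_ind2 (fun x y => 0 < x /\ ln x = y)).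
  - by rewrite ln1 ltr01.
  - move=> x1 x2 y1 y2 [h1 e1] [h2 e2]; split; first exact: mulr_gt0.
    by rewrite lnM ?posrE // e1 e2.
  - by move=> i _; split.
by case.
Qed.

Lemma ler_Mn_self (R : numDomainType) (x : R) k : 0 <= x -> (0 < k)%N -> x <= x *+ k.
Proof. by case: k => // k x0 _; rewrite mulrSr lerDr mulrn_wge0. Qed.

Lemma mapG (K : fieldType) (T : comNzRingType) (f : {rmorphism K -> T}) (a b : {poly K}) n l k :
  map_poly f (Gs a b n l k) = Gs (map_poly f a) (map_poly f b) n l k.
Proof.
elim: k => [|k IH] /=; first by rewrite map_polyXn.
by rewrite rmorphD !rmorphM rmorphD rmorphMn /= -!deriv_map IH.
Qed.


Theorem lemma4p11 (R : realType) (K : fieldExtType rat) (m : nat)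
    (a b : {poly K}) (alpha : 'I_m -> K) (iota : {rmorphism K -> R[i]}) :
  (2 <= m)%N ->
  injective alpha ->
  a = \prod_(i < m) ('X - (alpha i)%:P) ->
  (size b <= m)%N ->
  (forall i : 'I_m, exists2 q : rat,
      b.[alpha i] / (a^`()).[alpha i] = ratr q &
      forall k : nat, q != - (k.+1)%:R) ->
  (forall k : nat, b`_m.-1 != - (k.+2)%:R) ->
  let c := \sum_(i < m) hv iota (alpha i) + m%:R * ln (absv iota 4) in
  exists g : nat -> R,
    (fun n : nat => g n / n%:R) @ \oo --> (0 : R) /\
    \forall n \near \oo,
      ln (\big[Num.max/0]_(l < m) polyabsv iota (Pnl a b n l))
        <= n%:R * c + g n.
Proof.
move=> hm inj ha hb hs hbm c.
set e := place_exp iota.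
have e0 : 0 <= e by rewrite /e /place_exp divr_ge0 // ler0n.
pose x_ (i : 'I_m) := @complex.Re R `|iota (alpha i)|.
pose gam (i : 'I_m) := Num.max 1 (x_ i).
have gam1 : forall i, 1 <= gam i by move=> i; rewrite le_max lexx.
pose S := (\max_(j < m) Num.Def.archi_bound (@complex.Re R `|iota b`_j|)%R)%N.
pose A : {poly R[i]} := \prod_(i < m) ('X - (- (gam i)%:C)%:P).
have [hA hA1] := Aprop gam1.
have hAa : maj (map_poly iota a) A.
  rewrite ha rmorph_prod /A; apply: (big_ind2 (@maj R)).
  - by rewrite -(expr0 'X); apply: maj_Xn.
  - by move=> ? ? ? ? h1 h2; apply: maj_mul.
  - move=> i _ /=; rewrite map_polyXsubC; apply: maj_XsubC.
    by rewrite {1}normC_Re lecR le_max lexx orbT.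
have hBb : maj (map_poly iota b) (A^`() *+ S).
  move=> j; rewrite coefMn coef_deriv coef_map /=.
  case: (ltnP j m) => hj.
  - have hb1 : `|iota b`_j| <= S%:R.
      have h := ltW (archi_boundP (Re_norm_ge0 (iota b`_j))).
      have h2 : @complex.Re R `|iota b`_j| <= S%:R.
        apply: le_trans h _; rewrite ler_nat.
        exact: (@leq_bigmax _ (fun j : 'I_m => Num.Def.archi_bound (@complex.Re R `|iota b`_j|)) (Ordinal hj)).
      by rewrite {1}normC_Re -(rmorph_nat (real_complex R)) lecR.
    apply: le_trans hb1 _; apply: ler_wMn2r.
    apply: le_trans (hA1 j.+1 hj) _.
    by rewrite mulrSr lerDr mulrn_wge0 // (maj_ge0 _ hA).
  - rewrite nth_default ?rmorph0 ?normr0; last exact: leq_trans hb hj.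
    by rewrite !mulrn_wge0 // (maj_ge0 _ hA).
have a0 : a != 0 by rewrite ha monic_neq0 // monic_prod_XsubC.
pose P1 := \prod_(i < m) (1 + gam i).
have P1ge1 : 1 <= P1.
  apply: (big_ind (fun x => 1 <= x)) => //; first by move=> ? ? ? ?; apply: mulr_ege1.
  by move=> i _; rewrite lerDl (le_trans ler01 (gam1 i)).
pose T n := P1 ^+ (n + S) *+ 2 ^ (m * (n + S) + m).
have T1 : forall n, 1 <= T n.
  move=> n; apply: le_trans (exprn_ege1 (n + S) P1ge1) _.
  by apply: ler_Mn_self; [apply: le_trans (exprn_ege1 (n + S) P1ge1) | rewrite expn_gt0].
have hT : forall n l k, (l < m)%N -> @complex.Re R `|iota (Pnl a b n l)`_k| <= T n.
  move=> n l k hl.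
  have hG := maj_Gs n l n hAa hBb.
  rewrite -mapG in hG.
  have hk := key hG hA (hA1 0%N (leq0n m)) k.
  have -> : iota (Pnl a b n l)`_k = (n`!%:R)^-1 * (map_poly iota (Gs a b n l n))`_k.
    by rewrite /Pnl iterG // subnn expr0 mul1r coefZ rmorphM fmorphV rmorph_nat coef_map.
  set Q := A ^+ (n + S) * 'X^l in hk.
  have hQ1 : Q.[1] = (P1%:C) ^+ (n + S).
    rewrite /Q hornerM hornerXn expr1n mulr1 horner_exp horner_prod /P1 rmorph_prod.
    congr (_ ^+ _); apply: eq_bigr => i _.
    by rewrite hornerXsubC opprK rmorphD rmorph1.
  have hsQ : (size Q <= m * (n + S) + m)%N.
    rewrite /Q; apply: leq_trans (size_polyMleq _ _) _; rewrite size_polyXn addnS /=.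
    apply: leq_trans (leq_add (size_poly_exp_leq _ _) (leqnn l)) _.
    rewrite /A size_prod_XsubC /index_enum unlock /= -enumT size_enum_ord /=.
    by rewrite addSn -addnS leq_add2l.
  have : `|(n`!%:R)^-1 * (map_poly iota (Gs a b n l n))`_k| <= (T n)%:C.
    apply: le_trans hk _; rewrite hQ1 /T rmorphMn rmorphXn.
    rewrite -!(mulr_natr (P1%:C ^+ (n + S))); apply: ler_wpM2l.
      by rewrite exprn_ge0 // ler0c (le_trans ler01 P1ge1).
    by rewrite ler_nat leq_exp2l.
  by rewrite {1}normC_Re lecR.
pose L := \sum_(i < m) ln (gam i).
pose C0 := e * (S%:R * L + (2 * m * S + m)%:R * ln 2).
exists (fun=> C0); split.
  rewrite -cvg_shiftS /=.
  have := @cvgMl_tmp R nat \oo _ (@harmonic R) C0 0 (@cvg_harmonic R).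
  rewrite mulr0 => h.
  exact: h.
apply: nearW => n.
have hmax : \big[Num.max/0]_(l < m) polyabsv iota (Pnl a b n l) <= T n `^ e.
  apply: bigmax_le => [|l _]; first exact: powR_ge0.
  rewrite /polyabsv; apply: bigmax_le => [|k _]; first exact: powR_ge0.
  rewrite /absv -/e; apply: ge0_ler_powR => //.
  - by rewrite nnegrE Re_norm_ge0.
  - by rewrite nnegrE (le_trans ler01 (T1 n)).
  - exact: hT.
have lnTe : ln (\big[Num.max/0]_(l < m) polyabsv iota (Pnl a b n l)) <= e * ln (T n).
  rewrite -ln_powR; case: (lerP (\big[Num.max/0]_(l < m) polyabsv iota (Pnl a b n l)) 0) => h0.
    by rewrite ln0 // ln_powR mulr_ge0 // ln_ge0.
  by rewrite ler_ln // posrE powR_gt0 // (lt_le_trans ltr01 (T1 n)).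
apply: le_trans lnTe _.
have hv_eq : forall i, hv iota (alpha i) = e * ln (gam i).
  move=> i; rewrite /hv /absv -/e /gam.
  have r0 : 0 <= x_ i := Re_norm_ge0 _.
  case: (lerP (x_ i) 1) => hr.
    have h1 : x_ i `^ e <= 1.
      by have := ge0_ler_powR e0 r0 ler01 hr; rewrite powR1.
    by rewrite !max_l // ln1 mulr0.
  have h1 : 1 <= x_ i `^ e.
    by have := ge0_ler_powR e0 ler01 r0 (ltW hr); rewrite powR1.
  by rewrite !max_r ?(ltW hr) // ln_powR.
have h4 : ln (absv iota 4) = e * (ln 2 *+ 2).
  rewrite /absv -/e rmorph_nat normr_nat.
  have -> : (4%:R : R[i]) = (4 : R)%:C by rewrite rmorph_nat.
  rewrite /= ln_powR.
  have -> : (4 : R) = 2 ^+ 2 by rewrite expr2 -natrM.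
  by rewrite lnXn.
have hc : c = e * L + m%:R * (e * (ln 2 *+ 2)).
  by rewrite /c (eq_bigr _ (fun i _ => hv_eq i)) h4 -mulr_sumr.
have P1pos : 0 < P1 by apply: lt_le_trans ltr01 P1ge1.
have lnT : ln (T n) = ln P1 *+ (n + S) + ln 2 *+ (m * (n + S) + m).
  rewrite /T -mulr_natr lnM ?posrE ?exprn_gt0 ?ltr0n ?expn_gt0 //.
  by rewrite lnXn // natrX lnXn.
have lnP1 : ln P1 <= ln 2 *+ m + L.
  rewrite /P1 ln_prod; last by move=> i; apply: lt_le_trans ltr01 _; rewrite lerDl (le_trans ler01 (gam1 i)).
  apply: le_trans (_ : \sum_(i < m) (ln 2 + ln (gam i)) <= _).
    apply: ler_sum => i _.
    have g0 : 0 < gam i by apply: lt_le_trans ltr01 (gam1 i).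
    rewrite -lnM ?posrE // ler_ln ?posrE ?mulr_gt0 ?addr_gt0 //.
    by rewrite mulr_natl mulr2n lerD2r gam1.
  by rewrite big_split /= sumr_const card_ord.
rewrite lnT hc.
apply: le_trans (_ : e * ((ln 2 *+ m + L) *+ (n + S) + ln 2 *+ (m * (n + S) + m)) <= _).
  by rewrite ler_wpM2l // lerD2r ler_wMn2r.
rewrite le_eqVlt; apply/orP; left; apply/eqP; rewrite /C0 /=.

ring.
Qed.
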